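(* Let $X$ be a well-filtered coherent space. If $X$ is first-countable, then $X$ is sober.
   Context: Spaces are $T_0$; the specialization order is $x\le y$ iff $x\in\overline{\{y\}}$, and a subset is saturated if it is an upper set in this order. $X$ is well-filtered if for every filtered family $\mathcal F$ of compact saturated subsets and every open $U$, $\bigcap\mathcal F\subseteq U$ implies $F\subseteq U$ for some $F\in\mathcal F$. $X$ is coherent if the intersection of any two compact saturated subsets is compact. A $T_0$ space is sober if every irreducible closed set equals $\overline{\{x\}}$ for some point $x$. *)

(* Defs.v *)
From mathcomp Require Import all_boot all_order.
From mathcomp Require Import all_classical all_reals all_analysis.
Set Implicit Arguments. Unset Strict Implicit. Unset Printing Implicit Defensive.
Local Open Scope classical_set_scope.

Section Defs.
Context {T : topologicalType}.

Definition spec_le (x y : T) : Prop := closure [set y] x.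

Definition saturated (A : set T) : Prop :=
  forall x y, A x -> spec_le x y -> A y.

Definition compact_saturated (A : set T) : Prop := compact A /\ saturated A.

Definition filtered_family (F : set (set T)) : Prop :=
  (exists K, F K) /\
  (forall K1 K2, F K1 -> F K2 -> exists K3, F K3 /\ K3 `<=` K1 `&` K2).

Definition well_filtered : Prop :=
  forall (F : set (set T)) (U : set T),
    filtered_family F -> (forall K, F K -> compact_saturated K) ->
    open U -> \bigcap_(K in F) K `<=` U -> exists2 K, F K & K `<=` U.

Definition coherent : Prop :=
  forall A B : set T, compact_saturated A -> compact_saturated B ->
    compact (A `&` B).

Definition first_countable : Prop :=
  forall x : T, exists B : set (set T),
    countable B /\ (forall V, B V -> nbhs x V) /\
    (forall W, nbhs x W -> exists2 V, B V & V `<=` W).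

Definition irreducible_closed (A : set T) : Prop :=
  closed A /\ A !=set0 /\
  forall B C : set T, closed B -> closed C -> A `<=` B `|` C ->
    A `<=` B \/ A `<=` C.

Definition sober : Prop :=
  forall A : set T, irreducible_closed A -> exists x : T, A = closure [set x].

End Defs.
Arguments well_filtered : clear implicits.
Arguments coherent : clear implicits.
Arguments first_countable : clear implicits.
Arguments sober : clear implicits.

(* Main.v *)
Require Import Defs.
From mathcomp Require Import all_boot all_order.
From mathcomp Require Import all_classical all_reals all_analysis.

Section Helpers.
Local Open Scope classical_set_scope.
Context {T : topologicalType}.

Definition up (S : set T) : set T := [set y | exists2 s, S s & spec_le s y].

Lemma spec_refl (x : T) : spec_le x x.
Proof. exact: subset_closure. Qed.

Lemma spec_trans (x y z : T) : spec_le x y -> spec_le y z -> spec_le x z.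
Proof.
move=> xy yz; rewrite /spec_le.
have : closure [set y] `<=` closure [set z].
  rewrite [X in _ `<=` X](closure_id _).1; last exact: closed_closure.
  by apply: closureS => _ ->.
by apply.
Qed.

Lemma open_up (U : set T) p q : open U -> U p -> spec_le p q -> U q.
Proof.
move=> oU Up pq; have := pq U (open_nbhs_nbhs (conj oU Up)).
by case=> r [-> ].
Qed.

Lemma nbhs_up (B : set T) p q : nbhs p B -> spec_le p q -> B q.
Proof.
move=> nB pq; apply: interior_subset.
exact: open_up (@open_interior _ B) (nbhs_singleton (nbhs_interior nB)) pq.
Qed.

Lemma up_saturated S : saturated (up S).
Proof. by move=> x y [s Ss sx] xy; exists s => //; exact: spec_trans xy. Qed.

Lemma up1_compact d : compact (up [set d]).
Proof.
move=> F PF Fd; exists d; split; first by exists d => //; exact: spec_refl.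
move=> E B FE nB; have [z [[s -> dz] Ez]] := filter_ex (filterI Fd FE).
by exists z; split => //; exact: nbhs_up nB dz.
Qed.

Lemma not_cluster (F : set_system T) p : ~ cluster F p ->
  exists E B, F E /\ nbhs p B /\ (forall z, E z -> B z -> False).
Proof.
move=> nc; apply: contrapT => nex; apply: nc => E B FE nB.
apply: contrapT => nEB; apply: nex; exists E, B; split => //; split => // z Ez Bz.
by apply: nEB; exists z.
Qed.

Definition seqset (a : T) (x : nat -> T) k :=
  up ([set a] `|` [set x n | n in [set n | (k <= n)%N]]).

Lemma seqset_dec a x k k' : (k <= k')%N -> seqset a x k' `<=` seqset a x k.
Proof.
move=> kk z [s [->|[n kn <-]] sz]; first by exists a => //; left.
by exists (x n) => //; right; exists n => //; exact: leq_trans kn.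
Qed.

Lemma seq_compact (a : T) (x : nat -> T) k :
  (forall W, nbhs a W -> exists N, forall n, (N <= n)%N -> W (x n)) ->
  compact (seqset a x k).
Proof.
move=> cvx F PF FS; apply: contrapT => ncl.
have nc : forall p, seqset a x k p -> ~ cluster F p.
  by move=> p Sp cp; apply: ncl; exists p.
have Sa : seqset a x k a by exists a; [left | exact: spec_refl].
have Sx : forall n, (k <= n)%N -> seqset a x k (x n).
  by move=> n kn; exists (x n); [right; exists n | exact: spec_refl].
have [E0 [B0 [FE0 [nB0 EB0]]]] := @not_cluster F _ (nc a Sa).
have [N HN] := cvx _ (nbhs_interior nB0).
have claim : forall m, exists E, F E /\ forall n, (k <= n)%N -> (n < m)%N ->
    forall z, spec_le (x n) z -> ~ E z.
  elim=> [|m [E [FE HE]]]; first by exists setT; split => [|n _]; [exact: filterT | rewrite ltn0].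
  case: (leqP k m) => km.
    have [Em [Bm [FEm [nBm EBm]]]] := @not_cluster F _ (nc (x m) (Sx m km)).
    exists (E `&` Em); split; first exact: filterI.
    move=> n kn; rewrite ltnS leq_eqVlt => /orP[/eqP->|nm] z xz [Ez Emz].
      by apply: EBm Emz _; exact: nbhs_up nBm xz.
    exact: HE n kn nm z xz Ez.
  exists E; split => // n kn; rewrite ltnS => nm.
  by have := leq_trans kn nm; rewrite leqNgt km.
have [E [FE HE]] := claim N.
have /filter_ex [z [[s Ss sz] [E0z Ez]]] : F (seqset a x k `&` (E0 `&` E)).
  by apply: filterI => //; exact: filterI.
case: Ss => [Hs|[n kn Hn]].
  by rewrite Hs in sz; apply: EB0 E0z _; exact: nbhs_up nB0 sz.
rewrite -Hn in sz; case: (leqP N n) => Nn.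
  apply: EB0 E0z _; apply: interior_subset.
  exact: open_up (@open_interior _ B0) (HN n Nn) sz.
exact: HE n kn Nn z sz Ez.
Qed.

Lemma seqset_limit a x y :
  (forall W, nbhs a W -> exists N, forall n, (N <= n)%N -> W (x n)) ->
  (forall k, seqset a x k y) -> spec_le a y.
Proof.
move=> cvx H B nB; exists y; split => //.
have [N HN] := cvx _ (nbhs_interior nB).
have [s [Hs|[n Nn Hn]] sy] := H N.
  by rewrite Hs in sy; have [z [-> Bz]] := sy B nB.
rewrite -Hn in sy; apply: interior_subset.
exact: open_up (@open_interior _ B) (HN n Nn) sy.
Qed.

Fixpoint decr (h : nat -> set T) n : set T :=
  if n is m.+1 then decr h m `&` h m.+1 else h 0%N.

Lemma decr_sub h n : decr h n `<=` h n.
Proof. by case: n => [|m] //= z []. Qed.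

Lemma decr_dec h n m : (n <= m)%N -> decr h m `<=` decr h n.
Proof.
elim: m => [|m IH]; first by rewrite leqn0 => /eqP ->.
rewrite leq_eqVlt => /orP[/eqP -> //|]; rewrite ltnS => /IH sub z [gz _].
exact: sub.
Qed.

Lemma fc_dec (x : T) : first_countable T -> exists g : nat -> set T,
  [/\ forall n, nbhs x (g n), forall n m, (n <= m)%N -> g m `<=` g n &
      forall W, nbhs x W -> exists n, g n `<=` W].
Proof.
move=> fc; have [B [cB [BN Bcof]]] := fc x.
have [f finj] := countable_injP B cB.
have ex : forall n, exists V, nbhs x V /\
    ((exists U, B U /\ f U = n) -> B V /\ f V = n).
  move=> n.
  case: (pselect (exists V, B V /\ f V = n)) => [[V [BV fV]]|nV].
    by exists V; split; [exact: BN | move=> _; split].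
  by exists setT; split; [exact: filterT | move=> /nV].
have [h Hh] := choice ex.
exists (decr h); split.
- elim => [|m IH] /=; first exact: (Hh 0%N).1.
  exact: filterI IH (Hh _).1.
- by move=> n m; exact: decr_dec.
- move=> W /Bcof [V BV VW]; exists (f V).
  have [BhV fhV] := (Hh (f V)).2 (ex_intro _ V (conj BV erefl)).
  have eq : h (f V) = V by apply: finj => //; exact: mem_set.
  by move=> z gz; apply: VW; rewrite -eq; exact: decr_sub.
Qed.

Lemma directed_irr (A : set T) : well_filtered T -> coherent T ->
  first_countable T -> irreducible_closed A ->
  forall a b, A a -> A b -> exists2 y, A y & spec_le a y /\ spec_le b y.
Proof.
move=> wf coh fc [cA [_ irr]] a b Aa Ab.
have [ga [gaN gadec gacof]] := fc_dec a fc.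
have [gb [gbN gbdec gbcof]] := fc_dec b fc.
have hx : forall n, exists z, A z /\ (ga n)° z /\ (gb n)° z.
  move=> n; apply: contrapT => nz.
  have : A `<=` ~` (ga n)° `|` ~` (gb n)°.
    move=> z Az; case: (pselect ((ga n)° z)) => gaz; last by left.
    case: (pselect ((gb n)° z)) => gbz; last by right.
    by exfalso; apply: nz; exists z.
  have cCa : closed (~` (ga n)°) by rewrite closedC; exact: open_interior.
  have cCb : closed (~` (gb n)°) by rewrite closedC; exact: open_interior.
  case/(irr _ _ cCa cCb) => sub.
    by apply: (sub a Aa); exact: nbhs_singleton (nbhs_interior (gaN n)).
  by apply: (sub b Ab); exact: nbhs_singleton (nbhs_interior (gbN n)).
have [x Hx] := choice hx.
have cva : forall W, nbhs a W -> exists N, forall n, (N <= n)%N -> W (x n).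
  move=> W /gacof [N sub]; exists N => n Nn; apply: sub; apply: (gadec _ _ Nn).
  by apply: interior_subset; exact: (Hx n).2.1.
have cvb : forall W, nbhs b W -> exists N, forall n, (N <= n)%N -> W (x n).
  move=> W /gbcof [N sub]; exists N => n Nn; apply: sub; apply: (gbdec _ _ Nn).
  by apply: interior_subset; exact: (Hx n).2.2.
pose L k := seqset a x k `&` seqset b x k.
have filt : filtered_family (range L).
  split; first by exists (L 0%N), 0%N.
  move=> K1 K2 [k1 _ <-] [k2 _ <-]; exists (L (maxn k1 k2)); split.
    by exists (maxn k1 k2).
  move=> z [Saz Sbz]; split; split.
  - exact: seqset_dec (leq_maxl _ _) _ Saz.
  - exact: seqset_dec (leq_maxl _ _) _ Sbz.
  - exact: seqset_dec (leq_maxr _ _) _ Saz.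
  - exact: seqset_dec (leq_maxr _ _) _ Sbz.
have cs : forall K, range L K -> compact_saturated K.
  move=> K [k _ <-]; split.
    by apply: coh; split; (try exact: seq_compact); exact: up_saturated.
  move=> u v [Su Sv] uv; split; exact: up_saturated uv.
have oU : open (~` A) by rewrite openC.
have [y [Ly Ay]] : exists y, (forall k, L k y) /\ A y.
  apply: contrapT => ny.
  have hsub : \bigcap_(K in range L) K `<=` ~` A.
    move=> z Hz Az; apply: ny; exists z; split => // k; by apply: Hz; exists k.
  have [K [k _ <-] Ksub] := wf _ _ filt cs oU hsub.
  apply: (Ksub (x k) _ (Hx k).1).
  by rewrite /L /seqset /up; split; exists (x k); [right; exists k => /= | exact: spec_refl | right; exists k => /= | exact: spec_refl].
exists y => //; split.
  by apply: seqset_limit cva _ => k; exact: (Ly k).1.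
by apply: seqset_limit cvb _ => k; exact: (Ly k).2.
Qed.

Lemma sober_main : well_filtered T -> coherent T -> first_countable T -> sober T.
Proof.
move=> wf coh fc A irrA; have [cA [[a0 Aa0] irr]] := irrA.
pose F := [set K | exists2 d, A d & K = up [set d]].
have filt : filtered_family F.
  split; first by exists (up [set a0]), a0.
  move=> K1 K2 [d1 A1 ->] [d2 A2 ->].
  have [y Ay [d1y d2y]] := directed_irr A wf coh fc irrA d1 d2 A1 A2.
  exists (up [set y]); split; first by exists y.
  move=> z [s -> yz]; split.
    by exists d1 => //; exact: spec_trans yz.
  by exists d2 => //; exact: spec_trans yz.
have cs : forall K, F K -> compact_saturated K.
  by move=> K [d _ ->]; split; [exact: up1_compact | exact: up_saturated].
have oU : open (~` A) by rewrite openC.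
have [g [Hg Ag]] : exists g, (forall d, A d -> spec_le d g) /\ A g.
  apply: contrapT => ng.
  have hsub : \bigcap_(K in F) K `<=` ~` A.
    move=> z Hz Az; apply: ng; exists z; split => // d Ad.
    by have [s -> //] := Hz _ (ex_intro2 _ _ d Ad erefl).
  have [K [d Ad ->] Ksub] := wf F (~` A) filt cs oU hsub.
  by apply: (Ksub d) Ad; exists d => //; exact: spec_refl.
exists g; apply/seteqP; split; first by move=> d Ad; exact: Hg.
move=> z cz; rewrite (closure_id A).1 //.
by apply: (closureS (A := [set g])) cz => _ ->.
Qed.

End Helpers.

Theorem corollary3p13 (T : topologicalType) :
  kolmogorov_space T -> well_filtered T -> coherent T ->
  first_countable T -> sober T.
Proof.
by move=> _; exact: sober_main.
Qed.
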